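(* Let $\Gamma$ be a compact subset of a Euclidean space $(\mathbb R^n,d)$, let $\delta>0$, and let $m\in\mathbb N$ with $m\le n$, such that for every $\mathcal P\in\mathrm{Gr}(n,m)$ there exists $x\in\Gamma$ with $d(x,\mathcal P)\ge\delta$. Then there are $x_1,\dots,x_{m+1}\in\Gamma$ such that $\mathrm{MinHeight}(x_1,\dots,x_{m+1})\ge\delta$.
   Context: $\mathrm{Gr}(n,m)$ is the set of $m$-dimensional linear subspaces of $\mathbb R^n$. For vectors $a_1,\dots,a_k$ in the Euclidean space $(\mathbb R^n,d)$, $\mathrm{MinHeight}(a_1,\dots,a_k):=\min_{j\in\{1,\dots,k\}}d\big(a_j,\mathrm{span}(a_1,\dots,\widehat{a}_j,\dots,a_k)\big)$, where $\widehat{a}_j$ means $a_j$ is omitted (the span of the empty family is $\{0\}$). *)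

(* Defs.v *)
From HB Require Import structures.
From mathcomp Require Import all_boot all_order all_algebra.
From mathcomp Require Import all_classical all_reals all_analysis.
Set Implicit Arguments. Unset Strict Implicit. Unset Printing Implicit Defensive.
Import Order.TTheory GRing.Theory Num.Theory.
Import numFieldNormedType.Exports.
Local Open Scope classical_set_scope.
Local Open Scope ring_scope.

(* Euclidean norm on R^n (NOT the library's max-norm on matrices). *)
Definition enorm {R : realType} {n : nat} (x : 'rV[R]_n) : R :=
  Num.sqrt (\sum_(i < n) (x ord0 i) ^+ 2).

Definition edist_set {R : realType} {n : nat} (x : 'rV[R]_n) (S : set 'rV[R]_n) : R :=
  inf [set enorm (x - y) | y in S].

(* Elements of Gr(n,m) are represented as row spaces of m x n matrices of rank m;
   this is the subspace (as a set) spanned by the rows of P. *)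
Definition rowspace {R : realType} {m n : nat} (P : 'M[R]_(m, n)) : set 'rV[R]_n :=
  [set y | (y <= P)%MS].

(* span(a_1, .., \hat a_j, .., a_k), the span of the empty family being {0}. *)
Definition span_but {R : realType} {n k : nat} (a : 'I_k -> 'rV[R]_n) (j : 'I_k)
  : set 'rV[R]_n :=
  [set y | exists c : 'I_k -> R, y = \sum_(i < k | i != j) c i *: a i].

Definition height {R : realType} {n k : nat} (a : 'I_k -> 'rV[R]_n) (j : 'I_k) : R :=
  edist_set (a j) (span_but a j).

Definition MinHeight {R : realType} {n k : nat} (a : 'I_k.+1 -> 'rV[R]_n) : R :=
  \big[Order.min/height a ord0]_(j < k.+1) height a j.

(* Main.v *)
Require Import Defs.
From HB Require Import structures.
From mathcomp Require Import all_boot all_order all_algebra.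
From mathcomp Require Import all_classical all_reals all_analysis.
From mathcomp Require Import zify ring lra.
From mathcomp Require Import perm.
Import Order.TTheory GRing.Theory Num.Theory.
Import numFieldNormedType.Exports.
Local Open Scope classical_set_scope.
Local Open Scope ring_scope.
Set Implicit Arguments. Unset Strict Implicit. Unset Printing Implicit Defensive.

Section Basics.
Variable R : realType.

Definition dot {n} (u v : 'rV[R]_n) : R := (u *m v^T) 0 0.

Lemma dotE n (u v : 'rV[R]_n) : dot u v = \sum_(t < n) u 0 t * v 0 t.
Proof. by rewrite /dot mxE; apply: eq_bigr => t _; rewrite mxE. Qed.

Lemma dot_ge0 n (u : 'rV[R]_n) : 0 <= dot u u.
Proof. by rewrite dotE; apply: sumr_ge0 => t _; rewrite -expr2 sqr_ge0. Qed.

Lemma enormE n (u : 'rV[R]_n) : enorm u = Num.sqrt (dot u u).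
Proof. by rewrite /enorm dotE; congr Num.sqrt; apply: eq_bigr => t _; rewrite expr2. Qed.

Lemma enorm2 n (u : 'rV[R]_n) : enorm u ^+ 2 = dot u u.
Proof. by rewrite enormE sqr_sqrtr // dot_ge0. Qed.

Lemma dot_eq0 n (u : 'rV[R]_n) : dot u u = 0 -> u = 0.
Proof.
rewrite dotE => /eqP; rewrite psumr_eq0 => [/allP H|t _]; last by rewrite -expr2 sqr_ge0.
apply/rowP => t; rewrite mxE.
by have /(_ (mem_index_enum t))/implyP/(_ isT) := H t; rewrite mulf_eq0 orbb => /eqP.
Qed.

Lemma rank_gram k n (B : 'M[R]_(k, n)) : \rank (B *m B^T) = \rank B.
Proof.
have H1 : (kermx (B *m B^T) <= kermx B)%MS.
  rewrite sub_kermx; apply/eqP/row_matrixP => i; rewrite row_mul row0.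
  apply: dot_eq0; rewrite /dot trmx_mul !mulmxA -[_ *m B *m B^T]mulmxA -row_mul.
  by rewrite mulmx_ker row0 !mul0mx mxE.
have H2 : (kermx B <= kermx (B *m B^T))%MS by rewrite sub_kermx mulmxA mulmx_ker mul0mx.
have : \rank (kermx (B *m B^T)) = \rank (kermx B) by apply/eqP; rewrite eqn_leq !mxrankS.
rewrite !mxrank_ker; have := rank_leq_row B; have := rank_leq_row (B *m B^T); lia.
Qed.

Lemma inf_min (S : set R) x : S x -> (forall y, S y -> x <= y) -> inf S = x.
Proof.
move=> Sx lbx; apply/le_anti/andP; split.
  by apply: ge_inf => //; exists x.
by apply: lb_le_inf => //; exists x.
Qed.

Definition mxof k n (a : 'I_k -> 'rV[R]_n) : 'M[R]_(k, n) := \matrix_(i < k) a i.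

Lemma row_mxof k n (a : 'I_k -> 'rV[R]_n) i : row i (mxof a) = a i.
Proof. exact: rowK. Qed.

Lemma mxofE k n (a : 'I_k -> 'rV[R]_n) i t : mxof a i t = a i 0 t.
Proof. by rewrite -[in RHS]row_mxof [RHS]mxE. Qed.

Lemma rc'E n (N : 'M[R]_n.+1) j p q : row' j (col' j N) p q = N (lift j p) (lift j q).
Proof. by rewrite !mxE. Qed.

Lemma row_row'_mxof k n (a : 'I_k.+1 -> 'rV[R]_n) j l :
  row l (row' j (mxof a)) = a (lift j l).
Proof. by apply/rowP => t; rewrite !mxE -row_mxof mxE. Qed.

Lemma sum_but k (V : zmodType) (F : 'I_k.+1 -> V) j :
  \sum_(i | i != j) F i = \sum_(l < k) F (lift j l).
Proof.
rewrite big_mkcond (bigD1_ord j) //= eqxx add0r.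
by apply: eq_bigr => l _; rewrite eq_sym neq_lift.
Qed.

Lemma span_butE k n (a : 'I_k.+1 -> 'rV[R]_n) j y :
  span_but a j y <-> exists d : 'rV[R]_k, y = d *m row' j (mxof a).
Proof.
rewrite /span_but /=; split.
  move=> [c ->]; exists (\row_l c (lift j l)); rewrite mulmx_sum_row sum_but.
  by apply: eq_bigr => l _; rewrite row_row'_mxof mxE.
move=> [d ->]; exists (fun i => if unlift j i is Some l then d 0 l else 0).
rewrite mulmx_sum_row sum_but; apply: eq_bigr => l _; by rewrite row_row'_mxof liftK.
Qed.

Lemma mulmxT_entry m p n (X : 'M[R]_(m, n)) (Y : 'M[R]_(p, n)) i l :
  (X *m Y^T) i l = dot (row i X) (row l Y).
Proof. by rewrite dotE mxE; apply: eq_bigr => t _; rewrite !mxE. Qed.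

Lemma dot_split n (r w : 'rV[R]_n) : dot r w = 0 -> dot (r + w) (r + w) = dot r r + dot w w.
Proof.
rewrite !dotE => h.
transitivity (\sum_(t < n) r 0 t * r 0 t + \sum_(t < n) w 0 t * w 0 t + 2%:R * \sum_(t < n) r 0 t * w 0 t); last by rewrite h mulr0 addr0.
rewrite mulr_sumr -!big_split /=; apply: eq_bigr => t _; rewrite !mxE; ring.
Qed.

Lemma sumD1_ord k (V : zmodType) (F : 'I_k.+1 -> V) j :
  \sum_i F i = F j + \sum_(l < k) F (lift j l).
Proof. by rewrite (bigD1_ord j). Qed.

Lemma gram_unit k n (a : 'I_k.+1 -> 'rV[R]_n) j :
  let B := row' j (mxof a) in B *m B^T \in unitmx ->
  \det (mxof a *m (mxof a)^T) = \det (B *m B^T) * height a j ^+ 2.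
Proof.
move=> B Mu; set A := mxof a; set M := B *m B^T; set x := a j.
pose c0 := x *m B^T *m invmx M; pose r := x - c0 *m B.
have rB : r *m B^T = 0.
  by rewrite /r mulmxBl -mulmxA -/M mulmxKV // subrr.
have rBl l : dot r (a (lift j l)) = 0.
  have := congr1 (fun X : 'M[R]_(1, k) => X 0 l) rB; rewrite !mxE => <-.
  by rewrite dotE; apply: eq_bigr => t _; rewrite -row_row'_mxof !mxE.
have hj : height a j = enorm r.
  rewrite /height /edist_set; apply: inf_min.
    exists (c0 *m B); first by apply/span_butE; exists c0.
    by rewrite /r.
  move=> _ [y /span_butE [d ->] <-].
  have -> : a j - d *m row' j (mxof a) = r + (c0 - d) *m B.
    by rewrite /r mulmxBl addrA subrK.
  rewrite !enormE ler_sqrt; last exact: dot_ge0.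
  rewrite dot_split ?lerDl ?dot_ge0 //.
  by rewrite /dot trmx_mul mulmxA rB mul0mx mxE.
pose c' : 'rV[R]_k.+1 := \row_i (if unlift j i is Some l then c0 0 l else 0).
have c'A : c' *m A = c0 *m B.
  rewrite !mulmx_sum_row (sumD1_ord _ j) mxE unlift_none scale0r add0r.
  by apply: eq_bigr => l _; rewrite mxE liftK row_row'_mxof row_mxof.
pose u : 'cV[R]_k.+1 := delta_mx j 0.
pose E := 1%:M - u *m c'.
have detE : \det E = 1.
  rewrite (expand_det_row _ j).
  have cofE l : cofactor E j l = cofactor 1%:M j l.
    rewrite /cofactor; congr (_ * \det _); apply/matrixP => p q; rewrite !mxE.
    rewrite big_ord1 !mxE.
    by rewrite [lift j p == j]eq_sym (negbTE (neq_lift j p)) /= mul0r subr0.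
  under eq_bigr do rewrite cofE.
  have -> : \sum_l E j l * cofactor 1%:M j l = (E *m \adj 1%:M) j j.
    rewrite [RHS]mxE; apply: eq_bigr => l _; by rewrite [(\adj _) l j]mxE.
  rewrite adj1 (_ : E *m 1%:M = E); last exact: mulmx1.
  by rewrite /E !mxE big_ord1 !mxE unlift_none eqxx /= mulr0 subr0.
have EA : E *m A = A - u *m (c0 *m B) by rewrite /E mulmxBl mul1mx -mulmxA c'A.
pose At := E *m A.
have Atj : row j At = r.
  by apply/rowP => t; rewrite /At EA !mxE big_ord1 !mxE eqxx /= mul1r.
have Atl l : row (lift j l) At = a (lift j l).
  apply/rowP => t; rewrite /At EA !mxE big_ord1 !mxE [lift j l == j]eq_sym (negbTE (neq_lift j l)) /= mul0r subr0.
  done.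
pose N := At *m At^T.
have detN : \det N = \det M * dot r r.
  rewrite (expand_det_row _ j) (bigD1 j) //= big1 ?addr0; last first.
    move=> l; case: (unliftP j l) => [l' ->|-> /eqP //] _.
    by rewrite /N mulmxT_entry Atj Atl rBl mul0r.
  rewrite mulrC /N mulmxT_entry Atj; congr (_ * _).
  rewrite /cofactor -signr_odd addnn odd_double expr0 mul1r; congr (\det _).
  apply/matrixP => p q; rewrite rc'E !mulmxT_entry !Atl.
  by rewrite /B !row_row'_mxof.
have detNA : \det N = \det (A *m A^T).
  rewrite /N /At trmx_mul !mulmxA -[E *m A *m A^T]mulmxA !det_mulmx det_tr detE; ring.
by rewrite -detNA detN hj enorm2.
Qed.

Lemma gram_height k n (a : 'I_k.+1 -> 'rV[R]_n) j :
  \det (mxof a *m (mxof a)^T) =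
  \det (row' j (mxof a) *m (row' j (mxof a))^T) * height a j ^+ 2.
Proof.
have [Mu|Mnu] := boolP (row' j (mxof a) *m (row' j (mxof a))^T \in unitmx).
  exact: gram_unit.
set A := mxof a; set B := row' j A.
have detM : \det (B *m B^T) = 0.
  by apply/eqP; move: Mnu; rewrite unitmxE unitfE negbK.
rewrite detM mul0r.
have rkB : (\rank B < k)%N.
  rewrite -rank_gram; move: Mnu; rewrite -row_free_unit /row_free.
  have := rank_leq_row (B *m B^T); move=> h1 h2; rewrite -/A -/B /= in h1 h2; by rewrite ltn_neqAle h1 h2.
have sA : (A <= B + a j)%MS.
  apply/row_subP => i; case: (unliftP j i) => [l ->|->].
    apply: submx_trans (addsmxSl _ _).
    rewrite (_ : row (lift j l) A = row l B); first exact: row_sub.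
    by rewrite /B row_row'_mxof row_mxof.
  by rewrite /A row_mxof; exact: addsmxSr.
have rkA : (\rank A <= k)%N.
  have h1 := mxrankS sA; have h2 := (mxrank_adds_leqif B (a j)).1.
  have h3 := rank_leq_row (a j); lia.
apply/eqP; rewrite -[_ == 0]negbK -unitfE -unitmxE -row_free_unit /row_free rank_gram.
lia.
Qed.

Lemma row'_mxof k n (a : 'I_k.+1 -> 'rV[R]_n) j :
  row' j (mxof a) = mxof (fun l => a (lift j l)).
Proof. by apply/row_matrixP => l; rewrite row_row'_mxof row_mxof. Qed.

Lemma gram_ge0 k n (a : 'I_k -> 'rV[R]_n) : 0 <= \det (mxof a *m (mxof a)^T).
Proof.
elim: k a => [|k IH] a; first by rewrite det_mx00.
rewrite (gram_height a ord0) row'_mxof; apply: mulr_ge0; first exact: IH.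
exact: sqr_ge0.
Qed.

Lemma extend_rank p m n (B : 'M[R]_(p, n)) : (\rank B <= m)%N -> (m <= n)%N ->
  exists P : 'M[R]_(m, n), \rank P = m /\ (B <= P)%MS.
Proof.
move=> rB mn; exists (pid_mx m *m row_ebase B); split.
  by rewrite mxrankMfree ?rank_pid_mx // row_free_unit row_ebase_unit.
rewrite -[X in (X <= _)%MS]mulmx_ebase.
have e : (pid_mx (\rank B) : 'M[R]_(p, n)) = (pid_mx (\rank B) : 'M[R]_(p, m)) *m pid_mx m.
  by rewrite mul_pid_mx (minn_idPl rB) (minn_idPr rB).
by rewrite e mulmxA -(mulmxA _ (pid_mx m)) submxMl.
Qed.

Lemma enorm_ge0 n (u : 'rV[R]_n) : 0 <= enorm u.
Proof. exact: sqrtr_ge0. Qed.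

Lemma edist_mono n (x : 'rV[R]_n) (S T : set 'rV[R]_n) :
  S `<=` T -> S !=set0 -> edist_set x T <= edist_set x S.
Proof.
move=> ST [y Sy]; apply: lb_le_inf; first by exists (enorm (x - y)), y.
move=> _ [z Sz <-]; apply: ge_inf; last by exists z => //; exact: ST.
by exists 0 => _ [w _ <-]; exact: enorm_ge0.
Qed.

Lemma edist_ge0 n (x : 'rV[R]_n) (S : set 'rV[R]_n) : S !=set0 -> 0 <= edist_set x S.
Proof.
move=> [y Sy]; apply: lb_le_inf; first by exists (enorm (x - y)), y.
by move=> _ [w _ <-]; exact: enorm_ge0.
Qed.

Lemma span_rowspace k n (a : 'I_k.+1 -> 'rV[R]_n) j :
  span_but a j = rowspace (row' j (mxof a)).
Proof.
apply/seteqP; split => y; rewrite span_butE /rowspace /=.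
  by move=> [d ->]; exact: submxMl.
by move/submxP => [d ->]; exists d.
Qed.

Lemma height_ge0 k n (a : 'I_k.+1 -> 'rV[R]_n) j : 0 <= height a j.
Proof. by apply: edist_ge0; exists 0; exists (fun=> 0); rewrite big1 // => i _; rewrite scale0r. Qed.

Section Cont.
Variable T : topologicalType.

Lemma cont_add (f g : T -> R) : continuous f -> continuous g -> continuous (fun x => f x + g x).
Proof. move=> cf cg x; apply: cvgD; [exact: cf | exact: cg]. Qed.

Lemma cont_mul (f g : T -> R) : continuous f -> continuous g -> continuous (fun x => f x * g x).
Proof. move=> cf cg x; apply: cvgM; [exact: cf | exact: cg]. Qed.

Lemma cont_sum (I : Type) (r : seq I) (P : pred I) (F : I -> T -> R) :
  (forall i, continuous (F i)) -> continuous (fun x => \sum_(i <- r | P i) F i x).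
Proof.
move=> cF; elim: r => [|h r IH].
  by under eq_fun do rewrite big_nil; exact: cst_continuous.
under eq_fun do rewrite big_cons; case: (P h) => //.
exact: cont_add.
Qed.

Lemma cont_prod (I : Type) (r : seq I) (P : pred I) (F : I -> T -> R) :
  (forall i, continuous (F i)) -> continuous (fun x => \prod_(i <- r | P i) F i x).
Proof.
move=> cF; elim: r => [|h r IH].
  by under eq_fun do rewrite big_nil; exact: cst_continuous.
under eq_fun do rewrite big_cons; case: (P h) => //.
exact: cont_mul.
Qed.

Lemma cont_det p (M : T -> 'M[R]_p) : (forall i l, continuous (fun x => M x i l)) ->
  continuous (fun x => \det (M x)).
Proof.
move=> cM.
have -> : (fun x => \det (M x)) = (fun x => \sum_(s : 'S_p) (-1) ^+ s * \prod_i M x i (s i)).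
  by apply: funext => x; rewrite /determinant ?unlock.
apply: cont_sum => s; apply: cont_mul; first exact: cst_continuous.
by apply: cont_prod => i; exact: cM.
Qed.
End Cont.
End Basics.

Unset Implicit Arguments.
Set Strict Implicit.
Theorem mainTheorem6 (R : realType) (n m : nat) (Gamma : set 'rV[R]_n) (delta : R) :
  compact Gamma -> 0 < delta -> (m <= n)%N ->
  (forall P : 'M[R]_(m, n), \rank P = m ->
     exists x, Gamma x /\ delta <= edist_set x (rowspace P)) ->
  exists a : 'I_m.+1 -> 'rV[R]_n,
    (forall i, Gamma (a i)) /\ delta <= MinHeight a.
Proof.
move=> cG d0 mn hyp.
pose G k (a : 'I_k -> 'rV[R]_n) := \det (mxof a *m (mxof a)^T).
have greedy : forall k, (k <= m.+1)%N ->
    exists b : 'I_k -> 'rV[R]_n, (forall i, Gamma (b i)) /\ 0 < G k b.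
  elim=> [|k IH] km.
    exists (fun=> 0); split; first by move=> [].
    by rewrite /G det_mx00.
  have [b [Gb Gpos]] := IH (ltnW km).
  have rbm : (\rank (mxof b) <= m)%N by apply: leq_trans (rank_leq_row _) _; rewrite -ltnS.
  have [P [rP sP]] := extend_rank rbm mn.
  have [x [Gx dx]] := hyp P rP.
  pose b' : 'I_k.+1 -> 'rV[R]_n := fun i => if unlift ord_max i is Some l then b l else x.
  exists b'; split.
    by move=> i; rewrite /b'; case: (unliftP ord_max i).
  have e : row' ord_max (mxof b') = mxof b.
    by rewrite row'_mxof; congr mxof; apply: funext => l; rewrite /b' liftK.
  rewrite /G (gram_height b' ord_max) e; apply: mulr_gt0 => //; apply: exprn_gt0.
  apply: lt_le_trans d0 _; apply: le_trans dx _.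
  rewrite /height span_rowspace e {1}/b' unlift_none.
  apply: edist_mono; last by exists 0; rewrite /rowspace /= sub0mx.
  by move=> y; rewrite /rowspace /= => /submx_trans; apply.
pose K := [set f : {ptws 'I_m.+1 -> 'rV[R]_n} | forall i, Gamma (f i)].
have cK : compact K by exact: (@tychonoff _ (fun _ : 'I_m.+1 => 'rV[R]_n) (fun _ => Gamma)).

have [b [Gb Gbpos]] := greedy m.+1 (leqnn _).
have K0 : K !=set0 by exists b.
have ce : forall i t, continuous (fun f : {ptws 'I_m.+1 -> 'rV[R]_n} => f i 0 t).
  move=> i t f; apply: (@continuous_comp _ _ _ (fun f : {ptws 'I_m.+1 -> 'rV[R]_n} => f i) (fun v : 'rV[R]_n => v 0 t) f).
    exact: proj_continuous.
  exact: coord_continuous.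
have cGf : {within K, continuous (fun f : {ptws 'I_m.+1 -> 'rV[R]_n} => G m.+1 f)}.
  apply: continuous_subspaceT; apply: cont_det => i l.
  have -> : (fun f : {ptws 'I_m.+1 -> 'rV[R]_n} => (mxof f *m (mxof f)^T) i l) =
            (fun f => \sum_(t < n) f i 0 t * f l 0 t).
    by apply: funext => f; rewrite mulmxT_entry dotE !row_mxof.
  by apply: cont_sum => t; apply: cont_mul; exact: ce.
have [c Kc cmax] := compact_EVT_max K0 cK cGf.
have Kc' : forall i, Gamma (c i) by move: Kc; rewrite inE.
exists c; split; first exact: Kc'.
have Gc : 0 < G m.+1 c by apply: lt_le_trans Gbpos (cmax b _); rewrite inE.
have hj : forall j, delta <= height c j.
  move=> j; set B := row' j (mxof c).
  have eG : G m.+1 c = \det (B *m B^T) * height c j ^+ 2 by exact: gram_height.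
  have dB : 0 < \det (B *m B^T).
    rewrite lt_def; have -> : 0 <= \det (B *m B^T) by rewrite /B row'_mxof; exact: gram_ge0.
    by rewrite andbT; apply/eqP => h0; move: Gc; rewrite eG h0 mul0r ltxx.
  have rB : \rank B = m by rewrite -rank_gram mxrank_unit // unitmxE unitfE (gt_eqF dB).
  have [x [Gx dx]] := hyp B rB.
  pose c' : 'I_m.+1 -> 'rV[R]_n := fun i => if i == j then x else c i.
  have e' : row' j (mxof c') = B.
    rewrite /B !row'_mxof; congr mxof; apply: funext => l.
    by rewrite /c' [lift j l == j]eq_sym (negbTE (neq_lift j l)).
  have hc' : delta <= height c' j by rewrite /height span_rowspace e' /c' eqxx.
  have := cmax c'; rewrite inE => /(_ _)/Wrap[].
    by move=> i; rewrite /c'; case: eqP => _; [exact: Gx | exact: Kc'].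
  rewrite /G.
  rewrite (gram_height c' j) e' -/(G m.+1 c) eG ler_pM2l // ler_sqr ?nnegrE ?height_ge0 //.
  exact: le_trans.
rewrite /MinHeight; apply: (big_ind (fun y => delta <= y)) => //.
by move=> y z; rewrite le_min => -> ->.
Qed.
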